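(* Let $K$ be an idempotent ordered TGP-$\omega$-valuation monoid, $AP$ a finite set of atomic propositions, $k\in K\setminus\{\mathbf{0},\mathbf{1}\}$, and $\varphi=\bigvee_{1\le i\le n}(k_i\wedge\varphi_i)\in k\text{-}stLTL(K,AP)$, and let $\varphi_b:=\bigvee_{1\le i\le n}\varphi_i$. Then for every $w\in(\mathcal{P}(AP))^{\omega}$: $(\|\varphi\|,w)\ge k$ if and only if $w\models\varphi_b$.
   Context: Idempotent ordered TGP-$\omega$-valuation monoid $(K,+,\cdot,Val^{\omega},\mathbf{0},\mathbf{1})$: complete (infinitary sums over arbitrary index sets with the usual axioms), idempotent monoid $(K,+,\mathbf{0})$, totally ordered by the natural order $k\le k'$ iff $k'=k'+k$, with $Val^{\omega}$ from finitely-valued sequences in $K$ to $K$ and a product $\cdot$ with zero $\mathbf{0}$ and unit $\mathbf{1}$, such that $Val^{\omega}=\mathbf{0}$ if some entry is $\mathbf{0}$, $Val^{\omega}(\mathbf{1}^{\omega})=\mathbf{1}$, $\sum_I(k\cdot\mathbf{1})=k\cdot\sum_I\mathbf{1}$, $Val^{\omega}$ distributes over finite sums of families lying entirely in $L\setminus\{\mathbf{0},\mathbf{1}\}$ or entirely in $\{\mathbf{0},\mathbf{1}\}$ ($L\subseteq K$ finite), and $Val^{\omega}(\mathbf{1},k_1,\dots)=Val^{\omega}(k_1,\dots)$, $Val^{\omega}(k,\mathbf{1},\dots)=k$, $k\le\mathbf{1}$, $k_i\ge k\ \forall i\Rightarrow Val^{\omega}((k_i)_i)\ge k$. Weighted LTL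 over $AP$ and $K$: $\varphi::=k\mid a\mid\neg a\mid\varphi\vee\varphi\mid\varphi\wedge\varphi\mid\bigcirc\varphi\mid\varphi U\varphi\mid\square\varphi$, with semantics $\|\varphi\|:(\mathcal{P}(AP))^{\omega}\to K$: $(\|k\|,w)=k$; $(\|a\|,w)=\mathbf{1}$ if $a\in w(0)$ else $\mathbf{0}$; $\neg a$ dually; $\vee\mapsto +$, $\wedge\mapsto\cdot$ pointwise; $(\|\bigcirc\varphi\|,w)=(\|\varphi\|,w_{\ge1})$; $(\|\varphi U\psi\|,w)=\sum_{i\ge0}Val^{\omega}((\|\varphi\|,w_{\ge0}),\dots,(\|\varphi\|,w_{\ge i-1}),(\|\psi\|,w_{\ge i}),\mathbf{1},\mathbf{1},\dots)$; $(\|\square\varphi\|,w)=Val^{\omega}(((\|\varphi\|,w_{\ge i}))_{i\ge0})$. $true:=\mathbf{1}$, $\varphi\tilde U\psi:=\square\varphi\vee(\varphi U\psi)$. $sbLTL(K,AP)$: $\varphi::=true\mid a\mid\neg a\mid\varphi\vee\varphi\mid\varphi\wedge\varphi\mid\bigcirc\varphi\mid\varphi\tilde U\varphi\mid\square\varphi$. $L_k=\{k'\in K\mid k'\ge k\}$. $k\text{-}stLTL(K,AP)$ consists of formulas $\bigvee_{1\le i\le n}(k_i\wedge\varphi_i)$ with $k_i\in L_k\setminus\{\mathbf{0},\mathbf{1}\}$ and $\varphi_i\in sbLTL(K,AP)$. For a formula $\psi$ built from $true,a,\neg a,\vee,\wedge,\bigcirc,U,\square$ (with $\tilde U$ as abbreviation),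 $w\models\psi$ denotes classical LTL satisfaction at position $0$ (with $w,i\models a$ iff $a\in w(i)$, $\bigcirc$ referring to position $i+1$, $\psi U\chi$ holding at $i$ iff $\chi$ holds at some $j\ge i$ and $\psi$ at all $i\le i'<j$, and $\square\psi$ iff $\psi$ holds at all $j\ge i$). *)

(* Defs.v *)
From Stdlib Require Import List Arith.
Import ListNotations.

Definition fin_valued {K : Type} (d : nat -> K) : Prop :=
  exists l : list K, forall n, In (d n) l.

(** The natural order is  k <= k'  iff  k' = k' + k.
    Val is a total function on sequences, but all its axioms are only
    required on finitely-valued sequences (its domain in the paper). *)
Record IOTGPVM := {
  car :> Type;
  kplus : car -> car -> car;
  kzero : car;
  kone : car;
  kmul : car -> car -> car;
  ksum : forall I : Type, (I -> car) -> car;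
  val : (nat -> car) -> car;
  plus_assoc : forall a b c, kplus a (kplus b c) = kplus (kplus a b) c;
  plus_comm : forall a b, kplus a b = kplus b a;
  plus_zero : forall a, kplus a kzero = a;
  plus_idem : forall a, kplus a a = a;
  sum_empty : forall (I : Type) (k : I -> car), (I -> False) -> ksum I k = kzero;
  sum_single : forall (I : Type) (k : I -> car) (i0 : I),
      (forall i, i = i0) -> ksum I k = k i0;
  sum_pair : forall (I : Type) (k : I -> car) (i1 i2 : I), i1 <> i2 ->
      (forall i, i = i1 \/ i = i2) -> ksum I k = kplus (k i1) (k i2);
  sum_partition : forall (I J : Type) (f : I -> J) (k : I -> car),
      ksum I k = ksum J (fun j => ksum {i : I | f i = j} (fun x => k (proj1_sig x)));
  le_total : forall a b, b = kplus b a \/ a = kplus a b;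
  mul_zero_l : forall a, kmul kzero a = kzero;
  mul_zero_r : forall a, kmul a kzero = kzero;
  mul_one_l : forall a, kmul kone a = a;
  mul_one_r : forall a, kmul a kone = a;
  val_zero : forall d, fin_valued d -> (exists i, d i = kzero) -> val d = kzero;
  val_one : val (fun _ => kone) = kone;
  sum_mul_one : forall (I : Type) (a : car),
      ksum I (fun _ : I => kmul a kone) = kmul a (ksum I (fun _ : I => kone));
  val_distr : forall (I : nat -> Type) (k : forall j, I j -> car),
      (forall j, exists l : list (I j), forall x, In x l) ->
      ((exists L : list car, forall j x, In (k j x) L /\ k j x <> kzero /\ k j x <> kone)
       \/ (forall j x, k j x = kzero \/ k j x = kone)) ->
      val (fun j => ksum (I j) (k j)) =
      ksum (forall j, I j) (fun f => val (fun j => k j (f j)));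
  val_shift : forall d, fin_valued d ->
      val (fun n => match n with 0 => kone | S m => d m end) = val d;
  val_head : forall a, val (fun n => match n with 0 => a | S _ => kone end) = a;
  le_one : forall a, kone = kplus kone a;
  val_lb : forall d a, fin_valued d ->
      (forall i, d i = kplus (d i) a) -> val d = kplus (val d) a
}.

Definition kle (K : IOTGPVM) (a b : K) : Prop := b = kplus K b a.

(** words over P(AP), subsets represented as boolean predicates *)
Definition word (AP : Type) := nat -> AP -> bool.
Definition suffix {AP : Type} (w : word AP) (i : nat) : word AP := fun n => w (i + n).

Inductive wltl (K : IOTGPVM) (AP : Type) : Type :=
| WConst : K -> wltl K AP
| WAtom : AP -> wltl K AP
| WNAtom : AP -> wltl K AP
| WOr : wltl K AP -> wltl K AP -> wltl K AP
| WAnd : wltl K AP -> wltl K AP -> wltl K AP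
| WNext : wltl K AP -> wltl K AP
| WUntil : wltl K AP -> wltl K AP -> wltl K AP
| WAlways : wltl K AP -> wltl K AP.

Arguments WConst {K AP}. Arguments WAtom {K AP}. Arguments WNAtom {K AP}.
Arguments WOr {K AP}. Arguments WAnd {K AP}. Arguments WNext {K AP}.
Arguments WUntil {K AP}. Arguments WAlways {K AP}.

Fixpoint wsem {K : IOTGPVM} {AP : Type} (phi : wltl K AP) (w : word AP) : K :=
  match phi with
  | WConst k => k
  | WAtom a => if w 0 a then kone K else kzero K
  | WNAtom a => if w 0 a then kzero K else kone K
  | WOr p q => kplus K (wsem p w) (wsem q w)
  | WAnd p q => kmul K (wsem p w) (wsem q w)
  | WNext p => wsem p (suffix w 1)
  | WUntil p q =>
      ksum K nat (fun i => val K (fun j =>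
        if j <? i then wsem p (suffix w j)
        else if j =? i then wsem q (suffix w i)
        else kone K))
  | WAlways p => val K (fun i => wsem p (suffix w i))
  end.

Inductive ltl (AP : Type) : Type :=
| LTrue : ltl AP
| LAtom : AP -> ltl AP
| LNAtom : AP -> ltl AP
| LOr : ltl AP -> ltl AP -> ltl AP
| LAnd : ltl AP -> ltl AP -> ltl AP
| LNext : ltl AP -> ltl AP
| LUntil : ltl AP -> ltl AP -> ltl AP
| LAlways : ltl AP -> ltl AP.

Arguments LTrue {AP}. Arguments LAtom {AP}. Arguments LNAtom {AP}.
Arguments LOr {AP}. Arguments LAnd {AP}. Arguments LNext {AP}.
Arguments LUntil {AP}. Arguments LAlways {AP}.

Fixpoint models {AP : Type} (psi : ltl AP) (w : word AP) (i : nat) : Prop :=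
  match psi with
  | LTrue => True
  | LAtom a => w i a = true
  | LNAtom a => w i a = false
  | LOr p q => models p w i \/ models q w i
  | LAnd p q => models p w i /\ models q w i
  | LNext p => models p w (S i)
  | LUntil p q => exists j, i <= j /\ models q w j /\ (forall i', i <= i' < j -> models p w i')
  | LAlways p => forall j, i <= j -> models p w j
  end.

Inductive sbltl (AP : Type) : Type :=
| STrue : sbltl AP
| SAtom : AP -> sbltl AP
| SNAtom : AP -> sbltl AP
| SOr : sbltl AP -> sbltl AP -> sbltl AP
| SAnd : sbltl AP -> sbltl AP -> sbltl AP
| SNext : sbltl AP -> sbltl AP
| SUntilT : sbltl AP -> sbltl AP -> sbltl AP
| SAlways : sbltl AP -> sbltl AP.

Arguments STrue {AP}. Arguments SAtom {AP}. Arguments SNAtom {AP}.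
Arguments SOr {AP}. Arguments SAnd {AP}. Arguments SNext {AP}.
Arguments SUntilT {AP}. Arguments SAlways {AP}.

(** weighted reading: true := 1,  phi ~U psi := [] phi \/ (phi U psi) *)
Fixpoint sb_to_w {K : IOTGPVM} {AP : Type} (phi : sbltl AP) : wltl K AP :=
  match phi with
  | STrue => WConst (kone K)
  | SAtom a => WAtom a
  | SNAtom a => WNAtom a
  | SOr p q => WOr (sb_to_w p) (sb_to_w q)
  | SAnd p q => WAnd (sb_to_w p) (sb_to_w q)
  | SNext p => WNext (sb_to_w p)
  | SUntilT p q => WOr (WAlways (sb_to_w p)) (WUntil (sb_to_w p) (sb_to_w q))
  | SAlways p => WAlways (sb_to_w p)
  end.

Fixpoint sb_to_ltl {AP : Type} (phi : sbltl AP) : ltl AP :=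
  match phi with
  | STrue => LTrue
  | SAtom a => LAtom a
  | SNAtom a => LNAtom a
  | SOr p q => LOr (sb_to_ltl p) (sb_to_ltl q)
  | SAnd p q => LAnd (sb_to_ltl p) (sb_to_ltl q)
  | SNext p => LNext (sb_to_ltl p)
  | SUntilT p q => LOr (LAlways (sb_to_ltl p)) (LUntil (sb_to_ltl p) (sb_to_ltl q))
  | SAlways p => LAlways (sb_to_ltl p)
  end.

Fixpoint wbigor {K : IOTGPVM} {AP : Type} (l : list (wltl K AP)) : wltl K AP :=
  match l with
  | [] => WConst (kzero K)   (* never used: formulas have n >= 1 *)
  | [x] => x
  | x :: r => WOr x (wbigor r)
  end.

Fixpoint sb_bigor {AP : Type} (l : list (sbltl AP)) : sbltl AP :=
  match l with
  | [] => STrue   (* never used: formulas have n >= 1 *)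
  | [x] => x
  | x :: r => SOr x (sb_bigor r)
  end.

(** k-stLTL: the formula  \/_{i} (k_i /\ phi_i)  given by the list of pairs (k_i, phi_i) *)
Definition is_kst {K : IOTGPVM} {AP : Type} (k : K) (ps : list (K * sbltl AP)) : Prop :=
  ps <> [] /\
  forall p, In p ps -> kle K k (fst p) /\ fst p <> kzero K /\ fst p <> kone K.

Definition kst_formula {K : IOTGPVM} {AP : Type} (ps : list (K * sbltl AP)) : wltl K AP :=
  wbigor (map (fun p => WAnd (WConst (fst p)) (sb_to_w (snd p))) ps).

Definition kst_boolean {K : IOTGPVM} {AP : Type} (ps : list (K * sbltl AP)) : sbltl AP :=
  sb_bigor (map snd ps).

(* Main.v *)
Require Import Defs.
From Stdlib Require Import List.
From Stdlib Require Import Arith Lia Classical ClassicalEpsilon FunctionalExtensionality ProofIrrelevance.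
Import ListNotations.

Definition is01 (K : IOTGPVM) (x : K) := x = kzero K \/ x = kone K.

Lemma sum_all0 (K : IOTGPVM) (I : Type) (f : I -> K) :
  (forall i, f i = kzero K) -> ksum K I f = kzero K.
Proof.
  intro H.
  replace f with (fun _ : I => kmul K (kzero K) (kone K)).
  - rewrite sum_mul_one. apply mul_zero_l.
  - apply functional_extensionality; intro i. rewrite H. apply mul_zero_l.
Qed.

Lemma sum_const1 (K : IOTGPVM) (J : Type) (j0 : J) :
  ksum K J (fun _ => kone K) = kone K.
Proof.
  set (g := fun j : J => if excluded_middle_informative (j = j0) then true else false).
  rewrite (sum_partition K J bool g).
  rewrite (sum_pair K bool _ true false); [| discriminate | intros []; auto].
  assert (H0 : g j0 = true).
  { unfold g. destruct (excluded_middle_informative (j0 = j0)); congruence. }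
  rewrite (sum_single K _ _ (exist _ j0 H0)).
  - symmetry. apply le_one.
  - intros [j Hj].
    assert (Ej : j = j0).
    { unfold g in Hj. destruct (excluded_middle_informative (j = j0)); [auto|discriminate]. }
    subst. f_equal. apply proof_irrelevance.
Qed.

Lemma sum01_iff (K : IOTGPVM) (H01 : kzero K <> kone K) (I : Type) (f : I -> K) :
  (forall i, is01 K (f i)) -> is01 K (ksum K I f) /\ (ksum K I f = kone K <-> exists i, f i = kone K).
Proof.
  intro Hf.
  destruct (classic (exists i, f i = kone K)) as [[i0 Hi0]|Hn].
  - assert (E : ksum K I f = kone K).
    { set (h := fun i => if excluded_middle_informative (f i = kone K) then true else false).
      rewrite (sum_partition K I bool h).
      rewrite (sum_pair K bool _ true false); [| discriminate | intros []; auto].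
      assert (H0 : h i0 = true).
      { unfold h. destruct (excluded_middle_informative (f i0 = kone K)); congruence. }
      replace (fun x : {i : I | h i = true} => f (proj1_sig x)) with
        (fun _ : {i : I | h i = true} => kone K).
      - rewrite (sum_const1 K _ (exist _ i0 H0)). symmetry. apply le_one.
      - apply functional_extensionality. intros [i Hi]. simpl.
        assert (Ei : f i = kone K).
        { unfold h in Hi. destruct (excluded_middle_informative (f i = kone K)); congruence. }
        auto. }
    rewrite E. split; [right; reflexivity|]. split; eauto.
  - assert (E : ksum K I f = kzero K).
    { apply sum_all0. intro i. destruct (Hf i); auto. exfalso; eauto. }
    rewrite E. split; [left; reflexivity|]. split; intro H; [congruence|contradiction].
Qed.

Lemma val01_iff (K : IOTGPVM) (H01 : kzero K <> kone K) (d : nat -> K) :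
  (forall j, is01 K (d j)) -> is01 K (val K d) /\ (val K d = kone K <-> forall j, d j = kone K).
Proof.
  intro Hd.
  destruct (classic (forall j, d j = kone K)) as [Ha|Hn].
  - replace d with (fun _ : nat => kone K) by (apply functional_extensionality; intro; auto).
    rewrite val_one. split; [right; reflexivity|]. tauto.
  - assert (E : val K d = kzero K).
    { apply val_zero.
      - exists [kzero K; kone K]. intro n. destruct (Hd n) as [H|H]; rewrite H; simpl; auto.
      - apply not_all_ex_not in Hn. destruct Hn as [j Hj]. exists j.
        destruct (Hd j); tauto. }
    rewrite E. split; [left; reflexivity|]. split; intro H; [congruence|contradiction].
Qed.

Lemma models_shift (AP : Type) (w : word AP) (psi : ltl AP) :
  forall i j, models psi w (i + j) <-> models psi (suffix w i) j.
Proof.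
  induction psi; intros i j; simpl; try (unfold suffix; tauto).
  - rewrite IHpsi1, IHpsi2. tauto.
  - rewrite IHpsi1, IHpsi2. tauto.
  - rewrite <- IHpsi. replace (i + S j) with (S (i + j)) by lia. tauto.
  - split.
    + intros [j' [H1 [H2 H3]]]. exists (j' - i). split; [lia|]. split.
      * apply IHpsi2. replace (i + (j' - i)) with j' by lia. auto.
      * intros i' Hi'. apply IHpsi1. apply H3. lia.
    + intros [j' [H1 [H2 H3]]]. exists (i + j'). split; [lia|]. split.
      * apply IHpsi2. auto.
      * intros i' Hi'. replace i' with (i + (i' - i)) by lia. apply IHpsi1. apply H3. lia.
  - split.
    + intros H j' Hj'. apply IHpsi. apply H. lia.
    + intros H j' Hj'. replace j' with (i + (j' - i)) by lia. apply IHpsi. apply H. lia.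
Qed.

Lemma models_suffix (AP : Type) (w : word AP) (psi : ltl AP) i :
  models psi w i <-> models psi (suffix w i) 0.
Proof. pose proof (models_shift AP w psi i 0) as H. rewrite Nat.add_0_r in H. exact H. Qed.

Lemma plus01 (K : IOTGPVM) (H01 : kzero K <> kone K) a b :
  is01 K a -> is01 K b -> is01 K (kplus K a b) /\ (kplus K a b = kone K <-> a = kone K \/ b = kone K).
Proof.
  intros [Ha|Ha] [Hb|Hb]; subst.
  - rewrite plus_zero. split; [left; auto|]. split; [intro; congruence| intros [H|H]; congruence].
  - rewrite plus_comm, <- le_one. split; [right; auto|]. tauto.
  - rewrite <- le_one. split; [right; auto|]. tauto.
  - rewrite <- le_one. split; [right; auto|]. tauto.
Qed.

Lemma mul01 (K : IOTGPVM) (H01 : kzero K <> kone K) a b :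
  is01 K a -> is01 K b -> is01 K (kmul K a b) /\ (kmul K a b = kone K <-> a = kone K /\ b = kone K).
Proof.
  intros [Ha|Ha] [Hb|Hb]; subst.
  - rewrite mul_zero_l. split; [left; auto|]. split; [intro; congruence| intros [H H']; congruence].
  - rewrite mul_zero_l. split; [left; auto|]. split; [intro; congruence| intros [H H']; congruence].
  - rewrite mul_one_l. split; [left; auto|]. split; [intro; congruence| intros [H H']; congruence].
  - rewrite mul_one_l. split; [right; auto|]. tauto.
Qed.

Lemma sem01 (K : IOTGPVM) (AP : Type) (H01 : kzero K <> kone K) (psi : sbltl AP) :
  forall w : word AP, is01 K (wsem (sb_to_w psi) w) /\
    (wsem (sb_to_w psi) w = kone K <-> models (sb_to_ltl psi) w 0).
Proof.
  assert (Halw : forall p : sbltl AP,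
    (forall w : word AP, is01 K (wsem (sb_to_w p) w) /\
      (wsem (sb_to_w p) w = kone K <-> models (sb_to_ltl p) w 0)) ->
    forall w : word AP, is01 K (wsem (@WAlways K AP (sb_to_w p)) w) /\
      (wsem (@WAlways K AP (sb_to_w p)) w = kone K <-> models (LAlways (sb_to_ltl p)) w 0)).
  { intros p IH w. simpl.
    destruct (val01_iff K H01 (fun i => wsem (sb_to_w p) (suffix w i))) as [A B].
    { intro; apply IH. }
    split; auto. rewrite B. split.
    - intros H j _. apply (proj2 (models_suffix AP w _ j)). apply (proj2 (IH (suffix w j))). auto.
    - intros H j. apply (proj2 (IH (suffix w j))). apply (proj1 (models_suffix AP w _ j)). apply H. lia. }
  assert (Hunt : forall p q : sbltl AP,
    (forall w : word AP, is01 K (wsem (sb_to_w p) w) /\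
      (wsem (sb_to_w p) w = kone K <-> models (sb_to_ltl p) w 0)) ->
    (forall w : word AP, is01 K (wsem (sb_to_w q) w) /\
      (wsem (sb_to_w q) w = kone K <-> models (sb_to_ltl q) w 0)) ->
    forall w : word AP, is01 K (wsem (@WUntil K AP (sb_to_w p) (sb_to_w q)) w) /\
      (wsem (@WUntil K AP (sb_to_w p) (sb_to_w q)) w = kone K <->
        models (LUntil (sb_to_ltl p) (sb_to_ltl q)) w 0)).
  { intros p q IHp IHq w. simpl.
    set (d := fun i j => if j <? i then wsem (sb_to_w p) (suffix w j)
        else if j =? i then wsem (sb_to_w q) (suffix w i) else kone K).
    assert (Hd : forall i j, is01 K (d i j)).
    { intros i j. unfold d. destruct (j <? i); [apply IHp|].
      destruct (j =? i); [apply IHq| right; auto]. }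
    assert (Hu : forall i, is01 K (val K (d i)) /\
       (val K (d i) = kone K <-> (forall j, j < i -> models (sb_to_ltl p) w j) /\ models (sb_to_ltl q) w i)).
    { intro i. destruct (val01_iff K H01 (d i) (Hd i)) as [A B]. split; auto.
      rewrite B. split.
      - intro H. split.
        + intros j Hj. apply (proj2 (models_suffix AP w _ j)). apply (proj2 (IHp (suffix w j))). specialize (H j). unfold d in H.
          replace (j <? i) with true in H by (symmetry; apply Nat.ltb_lt; auto). auto.
        + apply (proj2 (models_suffix AP w _ i)). apply (proj2 (IHq (suffix w i))). specialize (H i). unfold d in H.
          rewrite Nat.ltb_irrefl, Nat.eqb_refl in H. auto.
      - intros [H1 H2] j. unfold d.
        destruct (j <? i) eqn:E1.
        + apply Nat.ltb_lt in E1. apply (proj2 (IHp (suffix w j))). apply (proj1 (models_suffix AP w _ j)). auto.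
        + destruct (j =? i) eqn:E2; auto. apply (proj2 (IHq (suffix w i))). apply (proj1 (models_suffix AP w _ i)). auto. }
    change (is01 K (ksum K nat (fun i => val K (d i))) /\
      (ksum K nat (fun i => val K (d i)) = kone K <->
       exists j, 0 <= j /\ models (sb_to_ltl q) w j /\ (forall i', 0 <= i' < j -> models (sb_to_ltl p) w i'))).
    destruct (sum01_iff K H01 nat (fun i => val K (d i))) as [A B].
    { intro i; apply Hu. }
    split; auto. rewrite B. split.
    - intros [i Hi]. apply Hu in Hi. destruct Hi as [H1 H2]. exists i.
      split; [lia|]. split; auto. intros i' Hi'. apply H1. lia.
    - intros [j [_ [H1 H2]]]. exists j. apply Hu. split; auto. intros j' Hj'. apply H2. lia. }
  induction psi; intro w.
  - simpl. split; [right; auto|]. tauto.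
  - simpl. destruct (w 0 a) eqn:E.
    + split; [right; auto|]. tauto.
    + split; [left; auto|]. split; intro; congruence.
  - simpl. destruct (w 0 a) eqn:E.
    + split; [left; auto|]. split; intro; congruence.
    + split; [right; auto|]. tauto.
  - simpl. destruct (IHpsi1 w) as [A1 B1]. destruct (IHpsi2 w) as [A2 B2].
    destruct (plus01 K H01 _ _ A1 A2) as [A B]. split; auto. rewrite B, B1, B2. tauto.
  - simpl. destruct (IHpsi1 w) as [A1 B1]. destruct (IHpsi2 w) as [A2 B2].
    destruct (mul01 K H01 _ _ A1 A2) as [A B]. split; auto. rewrite B, B1, B2. tauto.
  - simpl. destruct (IHpsi (suffix w 1)) as [A B]. split; auto. rewrite B.
    rewrite (models_suffix AP w _ 1). tauto.
  - destruct (Halw _ IHpsi1 w) as [A1 B1]. destruct (Hunt _ _ IHpsi1 IHpsi2 w) as [A2 B2].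
    simpl in *. destruct (plus01 K H01 _ _ A1 A2) as [A B]. split; auto. rewrite B, B1, B2. tauto.
  - apply Halw; auto.
Qed.

Lemma kle_plus (K : IOTGPVM) k a b : kle K k a -> kle K k (kplus K a b).
Proof.
  unfold kle. intro H. rewrite H at 1.
  rewrite <- plus_assoc, (plus_comm K k b), plus_assoc. reflexivity.
Qed.

Lemma wsem_or_and (K : IOTGPVM) (AP : Type) (c : K) (a b : wltl K AP) w :
  wsem (WOr (WAnd (WConst c) a) b) w = kplus K (kmul K c (wsem a w)) (wsem b w).
Proof. reflexivity. Qed.

Lemma models_sor (AP : Type) (a b : sbltl AP) w :
  models (sb_to_ltl (SOr a b)) w 0 = (models (sb_to_ltl a) w 0 \/ models (sb_to_ltl b) w 0).
Proof. reflexivity. Qed.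

Theorem lemma6 (K : IOTGPVM) (AP : Type) (HAP : exists l : list AP, forall a, In a l)
  (k : K) (Hk0 : k <> kzero K) (Hk1 : k <> kone K)
  (ps : list (K * sbltl AP)) (Hps : is_kst k ps) :
  forall w : word AP,
    kle K k (wsem (kst_formula ps) w) <-> models (sb_to_ltl (kst_boolean ps)) w 0.
Proof.
  intro w.
  assert (H01 : kzero K <> kone K).
  { intro E. apply Hk0. pose proof (le_one K k) as L. rewrite <- E in L.
    rewrite plus_comm, plus_zero in L. auto. }
  destruct Hps as [Hne Hall].
  assert (Main : (models (sb_to_ltl (kst_boolean ps)) w 0 /\ kle K k (wsem (kst_formula ps) w)) \/
                 (~ models (sb_to_ltl (kst_boolean ps)) w 0 /\ wsem (kst_formula ps) w = kzero K)).
  { unfold kst_formula, kst_boolean. revert Hne Hall.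
    induction ps as [|[c phi] r IH]; intros Hne Hall; [exfalso; apply Hne; auto|].
    destruct (Hall (c, phi) (or_introl eq_refl)) as [Hc _]. simpl in Hc.
    destruct (sem01 K AP H01 phi w) as [[E|E] B].
    - assert (Hm : ~ models (sb_to_ltl phi) w 0) by (rewrite <- B, E; auto).
      destruct r as [|y r'].
      + right. simpl. rewrite E, mul_zero_r. auto.
      + assert (IH' := IH ltac:(discriminate) (fun p Hp => Hall p (or_intror Hp))). clear IH.
        change (wbigor (map (fun p => WAnd (WConst (fst p)) (sb_to_w (snd p))) ((c,phi) :: y :: r')))
          with (WOr (WAnd (WConst c) (sb_to_w phi))
                 (wbigor (map (fun p => WAnd (WConst (fst p)) (sb_to_w (snd p))) (y :: r')))).
        change (sb_bigor (map snd ((c, phi) :: y :: r'))) with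
          (SOr phi (sb_bigor (map snd (y :: r')))).
        rewrite wsem_or_and. rewrite models_sor.
        rewrite E, mul_zero_r. rewrite plus_comm, plus_zero.
        destruct IH' as [[M L]|[M L]]; [left|right]; split; [right; exact M|exact L|intros [HH|HH]; [exact (Hm HH)|exact (M HH)]|exact L].
    - assert (Hm : models (sb_to_ltl phi) w 0) by (apply B; auto).
      left. destruct r as [|y r'].
      + simpl. rewrite E, mul_one_r. auto.
      + change (wbigor (map (fun p => WAnd (WConst (fst p)) (sb_to_w (snd p))) ((c,phi) :: y :: r')))
          with (WOr (WAnd (WConst c) (sb_to_w phi))
                 (wbigor (map (fun p => WAnd (WConst (fst p)) (sb_to_w (snd p))) (y :: r')))).
        change (sb_bigor (map snd ((c, phi) :: y :: r'))) with
          (SOr phi (sb_bigor (map snd (y :: r')))).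
        rewrite wsem_or_and. rewrite models_sor.
        rewrite E, mul_one_r. split; auto. apply kle_plus. auto. }
  destruct Main as [[M L]|[M L]]; split; try tauto.
  intro H. exfalso. rewrite L in H. unfold kle in H.
  rewrite plus_comm, plus_zero in H. auto.
Qed.
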